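(* In the setting of the context, suppose $G_{xy}^{[1]}=1$ and $G_x\cong\mathrm{Frob}(20)\times C_4$. Then $G_e\cong C_4\wr C_2$.
   Context: $\mathcal{A}=(G_x,G_e,G_{xy})$ is a finite, primitive amalgam of degree $(5,2)$ (no nontrivial subgroup of $G_{xy}$ normal in both $G_x$ and $G_e$; $|G_x:G_{xy}|=5$, $|G_e:G_{xy}|=2$), $G=G_x*_{G_{xy}}G_e$ acts on the coset graph (5-valent tree) $\Gamma$, $x$ is the vertex with stabiliser $G_x$, $y$ the neighbour with $G_e$ the setwise stabiliser of $\{x,y\}$ and $G_x\cap G_y=G_{xy}$. $G_z^{[1]}$ is the pointwise stabiliser of $z$ and its neighbours, $G_{xy}^{[1]}=G_x^{[1]}\cap G_y^{[1]}$. $\mathrm{Frob}(20)$ is the Frobenius group of order 20. *)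

(* Defs.v *)
From mathcomp Require Import all_boot all_fingroup.
Set Implicit Arguments. Unset Strict Implicit. Unset Printing Implicit Defensive.
Local Open Scope group_scope.

(* A finite amalgam (G_x, G_e, G_xy) is modelled inside an ambient finite group:
   Gx, Ge subgroups of gT with Gx :&: Ge = Gxy. *)

Definition primitive_amalgam (gT : finGroupType) (Gx Ge Gxy : {group gT}) :=
  forall H : {group gT}, H \subset Gxy -> H <| Gx -> H <| Ge -> H :=: 1.

Definition amalgam52 (gT : finGroupType) (Gx Ge Gxy : {group gT}) :=
  [/\ Gxy :=: Gx :&: Ge, #|Gx : Gxy| = 5 & #|Ge : Gxy| = 2].

(* G_z^[1]: kernel of the action of the vertex stabiliser Gz on the neighbours
   of z, which are the cosets of the arc stabiliser Gxy in Gz; i.e. the core *)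
Definition vertex_kernel (gT : finGroupType) (Gz Gxy : {set gT}) := gcore Gxy Gz.

(* G_xy^[1] = G_x^[1] :&: G_y^[1], where G_y = G_x :^ t for t in Ge \ Gxy *)
Definition edge_kernel (gT : finGroupType) (Gx Gxy : {set gT}) (t : gT) :=
  vertex_kernel Gx Gxy :&: vertex_kernel (Gx :^ t) Gxy.

Definition isFrob20xC4 (gT : finGroupType) (G : {group gT}) : Prop :=
  G \isog Grp (a : b : c : (a ^+ 5 = 1, b ^+ 4 = 1, a ^ b = a ^+ 2,
                           c ^+ 4 = 1, [~ a, c] = 1, [~ b, c] = 1)).

(* C4 wr C2 = (C4 x C4) : C2, base generated by a and a^t *)
Definition isC4wrC2 (gT : finGroupType) (G : {group gT}) : Prop :=
  G \isog Grp (a : t : (a ^+ 4 = 1, t ^+ 2 = 1, [~ a, a ^ t] = 1)).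

(* Main.v *)
Require Import Defs.
From mathcomp Require Import all_boot all_fingroup all_solvable all_algebra.
Local Open Scope group_scope.
Lemma model : exists rT : finGroupType, exists K : {group rT}, #|K| = 16%N /\
  K \homg Grp (a : b : c : (a ^+ 5 = 1, b ^+ 4 = 1, a ^ b = a ^+ 2,
                           c ^+ 4 = 1, [~ a, c] = 1, [~ b, c] = 1)).
Proof.
pose y : ('Z_4 * 'Z_4)%type := (Zp1, 1).
pose z : ('Z_4 * 'Z_4)%type := (1, Zp1).
exists ('Z_4 * 'Z_4)%type, [set: ('Z_4 * 'Z_4)%type]%G.
split. by rewrite cardsT card_prod card_ord.
apply/existsP; exists ((1, y), z); rewrite /= xpair_eqE.
apply/andP; split; last by vm_compute.
rewrite cycle1 joing1G /=.
have -> : <[y]> = setX [set: 'Z_4] 1.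
  by rewrite -morphim_pairg1 [X in _ @* X]Zp_cycle morphim_cycle ?inE.
have -> : <[z]> = setX 1 [set: 'Z_4].
  by rewrite -morphim_pair1g [X in _ @* X]Zp_cycle morphim_cycle ?inE.
rewrite (dprodWY (setX_dprod _ _)).
by apply/eqP/setP => -[u v]; rewrite !inE.
Qed.


Lemma conj_comm (gT : finGroupType) (x y : gT) : commute x y -> x ^ y = x.
Proof. by move/commgP/conjg_fixP. Qed.

From mathcomp Require Import zify.

Theorem mainTheorem8 (gT : finGroupType) (Gx Ge Gxy : {group gT}) (t : gT) :
  amalgam52 Gx Ge Gxy ->
  primitive_amalgam Gx Ge Gxy ->
  t \in Ge :\: Gxy ->
  edge_kernel Gx Gxy t :=: 1 ->
  isFrob20xC4 Gx ->
  isC4wrC2 Ge.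
Proof.
move=> [defGxy iGx iGe] _ /setDP[tGe tNxy] ek isoX.
have [rT [K [oK homK]]] := model.
have := isoX rT K; rewrite homK => /homgP[f imf].
have d16 : (16 %| #|Gx|)%N by rewrite -oK -imf dvdn_morphim.
case/existsP: (isoGrp_hom isoX) => -[[a b] c] /= /eqP[defGx a5 b4 ab c4 ac bc].
have sxyx : Gxy \subset Gx by rewrite defGxy subsetIl.
have sxye : Gxy \subset Ge by rewrite defGxy subsetIr.
have oGx : #|Gx| = (#|Gxy| * 5)%N by rewrite -iGx Lagrange.
have oGe : #|Ge| = (#|Gxy| * 2)%N by rewrite -iGe Lagrange.
have cac : commute a c by apply/commgP; rewrite ac.
have cbc : commute b c by apply/commgP; rewrite bc.
pose P := (<[b]> <*> <[c]>)%G.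
have cPc : <[c]> \subset 'C(<[b]>).
  by rewrite cent_cycle cycle_subG cent1E -cbc.
have nP : P \subset 'N(<[a]>).
  rewrite join_subG !norms_cycle ab mem_cycle /= conj_comm //.
  by rewrite cycle_id.
have defGx2 : Gx :=: <[a]> * P by rewrite -defGx -joingA norm_joinEr.
have defP : P :=: <[b]> * <[c]> by rewrite /= cent_joinEr.
have leP : (#|P| <= #[b] * #[c])%N.
  rewrite defP; change (#|(<[b]> * <[c]>)%g| <= #|<[b]>| * #|<[c]>|)%N.
  by rewrite (mul_cardG <[b]>%G <[c]>%G) leq_pmulr ?cardG_gt0.
have leGx : (#|Gx| <= #[a] * #|P|)%N.
  rewrite defGx2; change (#|(<[a]> * P)%g| <= #|<[a]>| * #|P|)%N.
  by rewrite (mul_cardG <[a]>%G P) leq_pmulr ?cardG_gt0.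
have oa : (#[a] <= 5)%N by rewrite dvdn_leq // order_dvdn a5.
have ob : (#[b] <= 4)%N by rewrite dvdn_leq // order_dvdn b4.
have oc4 : (#[c] %| 4)%N by rewrite order_dvdn c4.
have oc' : (#[c] <= 4)%N by rewrite dvdn_leq.
have d80 : (80 %| #|Gx|)%N.
  by rewrite (@Gauss_dvd 16 5) // d16 oGx dvdn_mull.
have o80 : #|Gx| = 80%N.
  have := dvdn_leq (cardG_gt0 Gx) d80. nia.
have oxy : #|Gxy| = 16%N by lia.
have oP : #|P| = 16%N by nia.
have oc : #[c] = 4%N.
  have : (4 <= #[c])%N by nia.
  lia.
have sPx : P \subset Gx.
  by rewrite -defGx -joingA joing_subr.
have cxc : Gx \subset 'C[c].
  by rewrite -defGx !join_subG !cycle_subG !cent1E -cac -cbc !eqxx.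
have sylP : 2.-Sylow(Gx) P by rewrite pHallE sPx oP o80 p_part.
have sylX : 2.-Sylow(Gx) Gxy by rewrite pHallE sxyx oxy o80 p_part.
have [g gGx defX] := Sylow_trans sylP sylX.
have abP : abelian P by rewrite abelianY !cycle_abelian cPc.
have abX : abelian Gxy by rewrite defX abelianJ.
have cX : {in Gxy &, forall x y, commute x y}.
  by move=> x y Hx Hy; apply: (centsP abX).
have cXc : c \in Gxy.
  have cP : c \in P by rewrite /= mem_gen // inE cycle_id orbT.
  have := memJ_conjg P g c; rewrite cP -defX.
  by rewrite conj_comm //; apply/cent1P; rewrite cent1C (subsetP cxc).
have nXe : Gxy <| Ge by rewrite index2_normal.
have nXt : t \in 'N(Gxy) by rewrite (subsetP (normal_norm nXe)).
pose d := c ^ t.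
have dX : d \in Gxy by rewrite /d memJ_norm.
have od : #[d] = 4%N by rewrite orderJ.
have k1 : <[c]> \subset vertex_kernel Gx Gxy.
  rewrite /vertex_kernel gcore_max ?cycle_subG //.
  by rewrite (subset_trans cxc) // -cent_cycle cent_sub.
have k2 : <[d]> \subset vertex_kernel (Gx :^ t) Gxy.
  rewrite /vertex_kernel gcore_max ?cycle_subG //.
  by rewrite /d cycleJ normJ conjSg (subset_trans cxc) // -cent_cycle cent_sub.
have tI : <[c]> :&: <[d]> = 1.
  apply/eqP; rewrite -subG1 /= -ek /edge_kernel.
  by rewrite setISS.
have cdc : <[d]> \subset 'C(<[c]>).
  by rewrite cent_cycle cycle_subG cent1E cX.
have dpX : <[c]> \x <[d]> = Gxy.
  rewrite dprodE //; apply/eqP; rewrite eqEcard mul_subG ?cycle_subG //=.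
  have := mul_cardG <[c]>%G <[d]>%G; rewrite /= tI cards1 muln1 => <-.
  by rewrite -!orderE oc od oxy.
have t2X : t ^+ 2 \in Gxy.
  have := expg_cardG (mem_quotient Gxy tGe).
  rewrite card_quotient ?normal_norm // iGe -morphX //.
  exact: coset_idr (groupX 2 nXt).
have := t2X; rewrite -(dprodW dpX) => /mulsgP[u v /cycleP[i ->] /cycleP[j ->] t2E].
have dtc : d ^ t = c.
  rewrite /d -conjgM -expg2 conj_comm //.
  by apply: cX; rewrite // groupX.
have ttt : (t ^+ 2) ^ t = t ^+ 2 by rewrite conjXg conj_comm.
have E' : c ^+ j * d ^+ i = c ^+ i * d ^+ j.
  have := ttt; rewrite t2E conjMg !conjXg dtc -/d => <-.
  by apply: cX; rewrite groupX.
have E2 := canRL (mulgK _) E'.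
have eij : c ^+ i = c ^+ j.
  have : (c ^+ i)^-1 * c ^+ j \in <[c]> :&: <[d]>.
    rewrite inE groupM ?groupV ?mem_cycle //=.
    rewrite E2 -!mulgA mulKg groupM ?groupV ?mem_cycle //.
  rewrite tI => /set1P H.
  by rewrite -(mulKVg (c ^+ i) (c ^+ j)) H mulg1.
have eij2 : d ^+ j = d ^+ i by apply: (mulgI (c ^+ i)); rewrite -E' eij.
pose w := c ^+ i.
have wX : w \in Gxy by rewrite groupX.
have wtX : w ^ t \in Gxy by rewrite memJ_norm.
have t2w : t ^+ 2 = w * w ^ t by rewrite t2E eij2 /w conjXg.
pose s := t * w^-1.
have s2 : s ^+ 2 = 1.
  have -> : s ^+ 2 = t ^+ 2 * (w^-1) ^ t * w^-1.
    by rewrite expg2 /s expg2 conjgE !mulgA mulgK.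
  rewrite t2w conjVg mulgK mulgV //.
have sGe : s \in Ge by rewrite groupM ?groupV // (subsetP sxye).
have sNX : s \notin Gxy by rewrite /s groupMr ?groupV.
have cs : c ^ s = d.
  rewrite /s conjgM -/d conj_comm //.
  by apply: cX; rewrite ?groupV.
have ds : d ^ s = c by rewrite -cs -conjgM -expg2 s2 conjg1.
have os : #[s] = 2%N.
  have : (#[s] %| 2)%N by rewrite order_dvdn s2.
  have : #[s] != 1%N.
    by rewrite order_eq1; apply: contraNneq sNX => ->; rewrite group1.
  case: (#[s]) (order_gt0 s) => [|[|[|n]]] //.
have sXs : Gxy :&: <[s]> = 1.
  apply/eqP; rewrite eqEsubset sub1G andbT; apply/subsetP => x.
  rewrite inE => /andP[xX /cycleP[k ekx]].
  move: xX; rewrite ekx -(expg_mod k s2) modn2.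
  by case: (odd k) => /= H; [move: H; rewrite (negPf sNX) | rewrite inE].

have nXs : <[s]> \subset 'N(Gxy) by rewrite cycle_subG (subsetP (normal_norm nXe)).
have sdX : Gxy ><| <[s]> = Ge.
  rewrite sdprodE //; apply/eqP; rewrite eqEcard mul_subG // ?cycle_subG //=.
  have := mul_cardG Gxy <[s]>%G; rewrite /= sXs cards1 muln1 => <-.
  by rewrite -orderE os oGe oxy.
have cJ : c \in <[c]> <*> <[s]> by rewrite mem_gen // inE cycle_id.
have sJ' : s \in <[c]> <*> <[s]> by rewrite mem_gen // inE cycle_id orbT.
have sJ : Ge :=: <[c]> <*> <[s]>.
  apply/eqP; rewrite eqEsubset join_subG !cycle_subG sGe (subsetP sxye) //=.
  rewrite -{1}(sdprodW sdX) -(dprodW dpX) !mul_subG // cycle_subG //.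
  by rewrite -cs groupJ.
apply: intro_isoGrp.
  apply/existsP; exists (c, s); rewrite /= !xpair_eqE -sJ eqxx /=.
  rewrite c4 s2 eqxx /= cs.
  by apply/commgP; apply: cX.
move=> hT H /existsP[[x y]] /= /eqP[defH x4 y2 xxy].
have cxx : commute x (x ^ y) by apply/commgP; rewrite xxy.
have dxc : (#[x] %| #[c])%N by rewrite oc order_dvdn x4.
have dxd : (#[x ^ y] %| #[d])%N by rewrite orderJ od order_dvdn x4.
have hcd : eltm dxd @* <[d]> \subset 'C(eltm dxc @* <[c]>).
  rewrite !morphim_cycle ?cycle_id //= !eltm_id cent_cycle cycle_subG cent1E.
  by rewrite cxx.
pose fX := dprodm dpX hcd.
have dys : (#[y] %| #[s])%N by rewrite os order_dvdn y2.
have fXc : fX c = x by rewrite /fX dprodmEl ?cycle_id //= eltm_id.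
have actf : {in Gxy & <[s]>, morph_act 'J 'J fX (eltm dys)}.
  move=> g0 h gX /cycleP[k ->] /=; rewrite eltmE.
  rewrite -(expg_mod k s2) -(expg_mod k y2) modn2.
  case: (odd k) => /=; last by rewrite !conjg1.
  rewrite !expg1.
  move: gX; rewrite -(dprodW dpX) => /mulsgP[u1 v1 /cycleP[i1 ->] /cycleP[j1 ->] ->].
  rewrite conjMg !conjXg cs ds.
  rewrite [d ^+ i1 * _]cX ?groupX // /fX !dprodmE ?mem_cycle //= !eltmE.
  rewrite conjMg !conjXg -conjgM -expg2 y2 conjg1.
  by apply: commuteX2.
apply/homgP; exists (sdprodm_morphism sdX actf).
rewrite [X in _ @* X]sJ morphimY ?cycle_subG -?sJ //.
rewrite (morphim_cycle _ (subsetP sxye _ cXc)) (morphim_cycle _ sGe) /=.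
rewrite sdprodmEl //= -/fX fXc sdprodmEr ?cycle_id //= eltm_id.
  by rewrite -defH.
exact: (subsetP sxye _ cXc).
Qed.
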